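(* Let $p\ge0$, $k\ge1$ and $0\le s\le r-1$. The stratum $\mathfrak{F}_sV_r=F_sV_r\setminus F_{s-1}V_r$ is a closed submanifold of $F_sV_r$ of codimension $s\cdot p$, i.e. of dimension $p\cdot(r-s)+r\cdot k$.
   Context: Here $q=1$: $V_r=V^k_r(\mathbb{R}^{p,1})$ is the space of unordered collections of $r$ pairwise disjoint unordered clusters in $\mathbb{R}^{p+1}=\mathbb{R}^p\times\mathbb{R}$, each cluster a set of $k$ distinct points with the same $\mathbb{R}^p$-coordinate; it is a manifold of dimension $pr+kr$. Two clusters are aligned if they have the same $\mathbb{R}^p$-coordinate, and entangled if their convex hulls (segments in a vertical line) intersect. For a configuration, consider the equivalence relation on its set of clusters generated by ''aligned and entangled''; the dexterity $\delta$ is the number of equivalence classes. For $s\ge-1$, $F_sV_r=\{[Z]\in V_r:\delta[Z]\ge r-s\}$ (an open subset of $V_r$), so $F_{-1}V_r=\emptyset$ and $F_{r-1}V_r=V_r$. *)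

(* Defs.v *)
From HB Require Import structures.
From mathcomp Require Import all_boot all_order all_algebra.
From mathcomp Require Import all_classical all_reals all_analysis.
Set Implicit Arguments. Unset Strict Implicit. Unset Printing Implicit Defensive.
Import Order.TTheory GRing.Theory Num.Theory.
Import numFieldNormedType.Exports.
Local Open Scope classical_set_scope.
Local Open Scope ring_scope.

Section Smooth.
Variable R : realType.

Fixpoint Cn {V W : normedModType R} (n : nat) (f : V -> W) (U : set V) : Prop :=
  match n with
  | 0 => forall x, U x -> {for x, continuous f}
  | n.+1 => (forall x, U x -> {for x, continuous f}) /\
            (forall x v, U x -> derivable f x v) /\
            (forall v : V, Cn n ('D_v f) U)
  end.

Definition smooth_on {V W : normedModType R} (f : V -> W) (U : set V) : Prop :=
  forall n, Cn n f U.

Definition submanifold_of {m n : nat} (S M : set 'M[R]_(m, n)) (d : nat) : Prop :=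
  S `<=` M /\
  forall a, S a -> exists (c : nat) (W : set 'M[R]_(m, n)) (g : 'M[R]_(m, n) -> 'rV[R]_c),
    [/\ (c + d)%N = (m * n)%N, open W, W a & W `<=` M] /\
    smooth_on g W /\
    (S `&` W) = [set x | W x /\ g x = 0] /\
    (forall x, (S `&` W) x -> forall w : 'rV[R]_c, exists v, 'D_v g x = w).

Definition rel_closed {T : topologicalType} (S M : set T) : Prop :=
  exists C, closed C /\ S = C `&` M.

Definition closed_submanifold_of {m n : nat} (S M : set 'M[R]_(m, n)) (d : nat) :=
  rel_closed S M /\ submanifold_of S M d.

End Smooth.

(* An ordered configuration is a matrix z : 'M[R]_(r, p + k); row i is the
   i-th cluster: its first p entries are the R^p-coordinate, its last k entries
   are the R-coordinates (heights) of the k points of the cluster, listed in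
   strictly increasing order.  V_r is the quotient of the set of such matrices
   with pairwise disjoint clusters by the free action of the symmetric group
   S_r permuting rows; the projection is an r!-sheeted covering map. *)
Section Config.
Variables (R : realType) (p k r : nat).
Local Notation mat := ('M[R]_(r, p + k)).

Definition base (z : mat) (i : 'I_r) : 'rV[R]_p := \row_(j < p) z i (lshift k j).
Definition height (z : mat) (i : 'I_r) (l : 'I_k) : R := z i (rshift p l).

Definition cluster (z : mat) (i : 'I_r) : set ('rV[R]_p * R) :=
  [set pt | pt.1 = base z i /\ exists l, pt.2 = height z i l].

(* the convex hull of cluster i is the vertical segment {base} x [min, max]:
   the convex hull of the heights in the real line *)
Definition hull (z : mat) (i : 'I_r) : set ('rV[R]_p * R) :=
  [set pt | pt.1 = base z i /\
            exists l l', height z i l <= pt.2 <= height z i l'].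

Definition ordered_config (z : mat) : Prop :=
  (forall i (l l' : 'I_k), (l < l')%N -> height z i l < height z i l') /\
  (forall i j, i != j -> cluster z i `&` cluster z j = set0).

Definition aligned (z : mat) (i j : 'I_r) : Prop := base z i = base z j.
Definition entangled (z : mat) (i j : 'I_r) : Prop := hull z i `&` hull z j !=set0.

Definition al_ent (z : mat) : rel 'I_r :=
  fun i j => `[< aligned z i j /\ entangled z i j >].

Definition al_ent_equiv (z : mat) : rel 'I_r :=
  connect (fun i j => al_ent z i j || al_ent z j i).

Definition dexterity (z : mat) : nat :=
  #|[set finset (al_ent_equiv z i) | i : 'I_r]%SET|.

(* lift of the filtration piece F_s V_r, s : int (s >= -1) *)
Definition Ffilt (s : int) : set mat :=
  [set z | ordered_config z /\ (r%:Z - s <= (dexterity z)%:Z)%R].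

Definition stratum (s : int) : set mat := Ffilt s `\` Ffilt (s - 1).

End Config.

(* Main.v *)
Require Import Defs.
From HB Require Import structures.
From mathcomp Require Import all_boot all_order all_algebra.
From mathcomp Require Import all_classical all_reals all_analysis.
From mathcomp Require Import ring lra zify.
Require Import Defs.
Set Implicit Arguments. Unset Strict Implicit. Unset Printing Implicit Defensive.
Import Order.TTheory GRing.Theory Num.Theory.
Import numFieldNormedType.Exports.
Local Open Scope classical_set_scope.
Local Open Scope ring_scope.

Section Comb.
Local Open Scope nat_scope.
Local Close Scope classical_set_scope.
Variable (T : finType).

Definition symc (e : rel T) : rel T := fun i j => e i j || e j i.
Definition ncls (e : rel T) : nat := #|[set finset (connect (symc e) i) | i : T]|.

Lemma symc_sym e : connect_sym (symc e).
Proof. apply: sym_connect_sym => i j; by rewrite /symc orbC. Qed.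

Lemma ncls_le (e1 e2 : rel T) : (forall i j, e1 i j -> e2 i j) ->
  (ncls e2 <= ncls e1) /\
  (ncls e2 = ncls e1 -> forall i j, connect (symc e2) i j -> connect (symc e1) i j).
Proof.
move=> sub.
set E1 := connect (symc e1); set E2 := connect (symc e2).
have sE : forall i j, E1 i j -> E2 i j.
  apply: connect_sub => i j /orP [/sub h|/sub h]; apply: connect1; by rewrite /symc h ?orbT.
pose h (X : {set T}) := [set y | [exists x in X, E2 x y]].
have hF : forall i, h (finset (E1 i)) = finset (E2 i).
  move=> i; apply/setP => y; rewrite !inE; apply/existsP/idP.
    case=> x /andP []; rewrite inE => /sE Hix Hxy.
    exact: connect_trans Hix Hxy.
  by move=> Hy; exists i; apply/andP; split=> //; rewrite inE; exact: connect0.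
have eqC : [set finset (E2 i) | i : T] = h @: [set finset (E1 i) | i : T].
  rewrite -imset_comp; apply: eq_imset => i /=; by rewrite hF.
rewrite /ncls -/E1 -/E2 eqC; split; first exact: leq_imset_card.
move=> /eqP /imset_injP hinj i j Hij.
have : finset (E1 i) = finset (E1 j).
  apply: hinj; rewrite ?imset_f //.
  rewrite !hF; apply/setP => y; rewrite !inE.
  exact: (same_connect (symc_sym e2) Hij).
move/setP => /(_ j); rewrite !inE => ->.
exact: connect0.
Qed.
End Comb.
Section Lin.
Variables (R : realType) (m n c : nat).
Variables (a1 a2 : 'I_c -> 'I_m) (b : 'I_c -> 'I_n).

Definition G (w : 'M[R]_(m, n)) : 'rV[R]_c :=
  \row_t (w (a1 t) (b t) - w (a2 t) (b t)).

Lemma G_lin : linear G.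
Proof.
move=> k u v; apply/rowP => t; rewrite !mxE /=.
by rewrite mulrBr addrACA opprD.
Qed.

HB.instance Definition _ := GRing.isLinear.Build R 'M[R]_(m, n) 'rV[R]_c _ G G_lin.

Lemma G_cont : continuous G.
Proof.
move=> u A /nbhs_ballP[e /= e0 eA].
apply/nbhs_ballP; exists (e / 2); first by rewrite /= divr_gt0.
move=> v [_ uv]; apply: eA; split => // i j.
rewrite !mxE.
have h1 := uv (a1 j) (b j); have h2 := uv (a2 j) (b j).
rewrite /ball /=.
set x1 := u _ _; set x2 := u _ _; set y1 := v _ _; set y2 := v _ _.
have -> : x1 - x2 - (y1 - y2) = (x1 - y1) - (x2 - y2).
  by ring.
apply: (le_lt_trans (ler_normB _ _)).
by rewrite (splitr e) ltrD.
Qed.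

Lemma Cn_cst (W : normedModType R) (y : W) N (U : set 'M[R]_(m, n)) :
  Cn N (fun _ : 'M[R]_(m, n) => y) U.
Proof.
elim: N y => [|N IH] y /=; first by move=> x _; exact: cst_continuous.
split; first by move=> x _; exact: cst_continuous.
split; first by move=> x v _; exact: derivable_cst.
move=> v.
have -> : 'D_v (fun _ : 'M[R]_(m, n) => y) = (fun _ => 0).
  by apply/funext => x; exact: derive_cst.
exact: IH.
Qed.

Lemma G_derive (x v : 'M[R]_(m, n)) : 'D_v G x = G v.
Proof.
rewrite deriveE; last exact/linear_differentiable/G_cont.
by rewrite diff_lin //; exact: G_cont.
Qed.

Lemma G_smooth U : smooth_on G U.
Proof.
case => [|N] /=; first by move=> x _; exact: G_cont.
split; first by move=> x _; exact: G_cont.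
split.
  move=> x v _; apply: diff_derivable; exact/linear_differentiable/G_cont.
move=> v.
have -> : 'D_v G = (fun _ => G v) by apply/funext => x; exact: G_derive.
exact: Cn_cst.
Qed.
End Lin.
Section Near.
Variables (R : realType) (m n : nat).
Local Notation mat := 'M[R]_(m, n).

Lemma lt_near (z : mat) i1 j1 i2 j2 : z i1 j1 < z i2 j2 ->
  \forall w \near z, (w : mat) i1 j1 < w i2 j2.
Proof.
move=> H; apply/nbhs_ballP; exists ((z i2 j2 - z i1 j1) / 2).
  by rewrite /= divr_gt0 // subr_gt0.
move=> w [_ zw].
have h1 := zw i1 j1; have h2 := zw i2 j2.
move: h1 h2; rewrite /ball /= !ltr_norml => /andP [h1 h1'] /andP [h2 h2'].
lra.
Qed.

Lemma neq_near (z : mat) i1 j1 i2 j2 : z i1 j1 != z i2 j2 ->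
  \forall w \near z, (w : mat) i1 j1 != w i2 j2.
Proof.
rewrite neq_lt => /orP [H|H]; apply: filterS (lt_near H) => w.
  by rewrite lt_neqAle => /andP [].
by rewrite lt_neqAle eq_sym => /andP [].
Qed.
End Near.

Lemma near_all (X : topologicalType) (T : finType) (z : X) (P : T -> X -> Prop) :
  (forall t, \forall w \near z, P t w) -> \forall w \near z, forall t, P t w.
Proof. move=> H; exact: filter_forall. Qed.

Section Cfg.
Variables (R : realType) (p k r : nat).
Local Notation mat := ('M[R]_(r, p + k)).
Implicit Types z w : mat.

Lemma base_neq z i j : base z i != base z j ->
  exists q, z i (lshift k q) != z j (lshift k q).
Proof.
move=> H.
have : [exists q, z i (lshift k q) != z j (lshift k q)].
  rewrite -[X in is_true X]negbK; apply/negP => /existsPn Hq.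
  move/eqP: H; apply; apply/rowP => q; rewrite !mxE.
  by move: (Hq q); rewrite negbK => /eqP.
by move/existsP.
Qed.

Lemma cl_disj z i j :
  (base z i = base z j -> forall l l', height z i l != height z j l') ->
  cluster z i `&` cluster z j = set0.
Proof.
move=> H; apply/seteqP; split=> [pt [[e1 [l h1]] [e2 [l' h2]]]|//].
have := H (etrans (esym e1) e2) l l'.
by rewrite -h1 -h2 eqxx.
Qed.

Lemma cl_disj_inv z i j : cluster z i `&` cluster z j = set0 ->
  base z i = base z j -> forall l l', height z i l != height z j l'.
Proof.
move=> H eb l l'; apply/eqP => eh.
have : (cluster z i `&` cluster z j) (base z i, height z i l).
  by split; split => //; [exists l | exists l'].
by rewrite H.
Qed.

Lemma disj_near z i j : cluster z i `&` cluster z j = set0 ->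
  \forall w \near z, cluster w i `&` cluster w j = set0.
Proof.
move=> H; case: (eqVneq (base z i) (base z j)) => eb.
  have Hh := cl_disj_inv H eb.
  have : \forall w \near z, forall ll : 'I_k * 'I_k,
      height w i ll.1 != height w j ll.2.
    apply: (near_all (P := fun ll (w : mat) => height w i ll.1 != height w j ll.2)).
    move=> ll; exact: neq_near (Hh _ _).
  apply: filterS => w Hw; apply: cl_disj => _ l l'; exact: (Hw (l, l')).
have [q Hq] := base_neq eb.
apply: filterS (neq_near Hq) => w Hw; apply: cl_disj => ebw; exfalso.
move/eqP: Hw; apply.
by have := congr1 (fun M : 'rV_p => M 0 q) ebw; rewrite !mxE.
Qed.

Definition mono z := forall i (l l' : 'I_k), (l < l')%N -> height z i l < height z i l'.

Lemma ord_near z : mono z -> \forall w \near z, mono w.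
Proof.
move=> H.
have : \forall w \near z, forall x : 'I_r * 'I_k * 'I_k,
    (x.1.2 < x.2)%N -> height w x.1.1 x.1.2 < height w x.1.1 x.2.
  apply: (near_all (P := fun (x : 'I_r * 'I_k * 'I_k) (w : mat) =>
    (x.1.2 < x.2)%N -> height w x.1.1 x.1.2 < height w x.1.1 x.2)).
  move=> [[i l] l'] /=.
  case: (ltnP l l') => hl.
    by apply: filterS (lt_near (H i l l' hl)) => w Hw _.
  by apply: filterE => w /=.
apply: filterS => w Hw i l l' hl; exact: (Hw (i, l, l') hl).
Qed.

Lemma mono_le_near z i l1 l2 : mono z -> height z i l1 <= height z i l2 ->
  \forall w \near z, height w i l1 <= height w i l2.
Proof.
move=> mz H; case: (eqVneq l1 l2) => [->|ne].
  by apply: filterE => w.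
have : height z i l1 != height z i l2.
  case: (ltngtP l1 l2) => c.
  - by rewrite lt_eqF ?mz.
  - by rewrite gt_eqF ?mz.
  - by move: ne; rewrite (val_inj c) eqxx.
move=> hne; have hlt : height z i l1 < height z i l2 by rewrite lt_neqAle hne H.
by apply: filterS (lt_near hlt) => w /ltW.
Qed.

Lemma P2_near z i j : \forall w \near z, al_ent w i j -> al_ent z i j.
Proof.
case: (boolP (al_ent z i j)) => H; first by apply: filterE.
move/asboolPn: H => H'.
case: (eqVneq (base z i) (base z j)) => eb; last first.
  have [q Hq] := base_neq eb.
  apply: filterS (neq_near Hq) => w Hw /asboolP [al _]; exfalso.
  move/eqP: Hw; apply.
  by have := congr1 (fun M : 'rV_p => M 0 q) al; rewrite !mxE.
have claim : forall x : 'I_k * 'I_k * 'I_k * 'I_k,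
   \forall w \near z, let: (l1, l2, l3, l4) := x in
     [\/ height w i l2 < height w i l1, height w j l4 < height w j l3,
         height w j l4 < height w i l1 | height w i l2 < height w j l3].
  move=> [[[l1 l2] l3] l4].
  case: (ltP (height z i l2) (height z i l1)) => c1.
    by apply: filterS (lt_near c1) => w Hw; apply: Or41.
  case: (ltP (height z j l4) (height z j l3)) => c2.
    by apply: filterS (lt_near c2) => w Hw; apply: Or42.
  case: (ltP (height z j l4) (height z i l1)) => c3.
    by apply: filterS (lt_near c3) => w Hw; apply: Or43.
  case: (ltP (height z i l2) (height z j l3)) => c4.
    by apply: filterS (lt_near c4) => w Hw; apply: Or44.
  exfalso; apply: H'; split => //.
  case: (leP (height z i l1) (height z j l3)) => c.
    exists (base z i, height z j l3); split; split => //.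
      by exists l1, l2; rewrite c c4.
    by exists l3, l4; rewrite lexx c2.
  exists (base z i, height z i l1); split; split => //.
    by exists l1, l2; rewrite lexx c1.
  by exists l3, l4; rewrite (ltW c) c3.
apply: filterS (filter_forall _ claim) => w Hw /asboolP [al [[b t] [[/= e1 [l1 [l2 /andP [a1 b1]]]] [/= e2 [l3 [l4 /andP [a2 b2]]]]]]].
exfalso; case: (Hw (l1, l2, l3, l4)) => /= c.
- by have := le_trans a1 b1; rewrite leNgt c.
- by have := le_trans a2 b2; rewrite leNgt c.
- by have := le_trans a1 b2; rewrite leNgt c.
- by have := le_trans a2 b1; rewrite leNgt c.
Qed.

Lemma P3_near z i j : ordered_config z -> al_ent z i j ->
  \forall w \near z, aligned w i j -> entangled w i j.
Proof.
move=> [mz dz] /asboolP [al [[b t] [[/= e1 [l1 [l2 /andP [a1 b1]]]] [/= e2 [l3 [l4 /andP [a2 b2]]]]]]].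
case: (eqVneq i j) => [<-|ne].
  apply: filterE => w _.
  by exists (base w i, height w i l1); split; split => //; exists l1, l1; rewrite lexx.
have Hh := cl_disj_inv (dz i j ne) al.
have ne' : j != i by rewrite eq_sym.
have Hh' := cl_disj_inv (dz j i ne') (esym al).
have c1 : height z i l1 < height z j l4.
  by rewrite lt_neqAle Hh (le_trans a1 b2).
have c2 : height z j l3 < height z i l2.
  by rewrite lt_neqAle Hh' (le_trans a2 b1).
have n1 := mono_le_near mz (le_trans a1 b1).
have n2 := mono_le_near mz (le_trans a2 b2).
apply: filterS (filterI (lt_near c1) (filterI (lt_near c2) (filterI n1 n2))).
move=> w [d1 [d2 [d3 d4]]] alw.
case: (leP (height w i l1) (height w j l3)) => c.
  exists (base w i, height w j l3); split; split => //.
    by exists l1, l2; rewrite c (ltW d2).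
  by exists l3, l4; rewrite lexx d4.
exists (base w i, height w i l1); split; split => //.
  by exists l1, l2; rewrite lexx d3.
by exists l3, l4; rewrite (ltW c) (ltW d1).
Qed.


Definition good z w := ordered_config w /\ (forall i j, al_ent w i j -> al_ent z i j) /\
  (forall i j, al_ent z i j -> aligned w i j -> entangled w i j).

Lemma near_good z : ordered_config z -> \forall w \near z, good z w.
Proof.
move=> oz; have oz' := oz; case: oz' => mz dz.
have h1 := ord_near mz.
have h2 : \forall w \near z, forall x : 'I_r * 'I_r, x.1 != x.2 ->
    cluster w x.1 `&` cluster w x.2 = set0.
  apply: (near_all (P := fun (x : 'I_r * 'I_r) (w : mat) => x.1 != x.2 ->
    cluster w x.1 `&` cluster w x.2 = set0)).
  move=> [i j] /=; case: (eqVneq i j) => [->|ne].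
    by apply: filterE => w /=.
  by apply: filterS (disj_near (dz i j ne)) => w Hw _.
have h3 : \forall w \near z, forall x : 'I_r * 'I_r, al_ent w x.1 x.2 -> al_ent z x.1 x.2.
  apply: (near_all (P := fun (x : 'I_r * 'I_r) (w : mat) =>
    al_ent w x.1 x.2 -> al_ent z x.1 x.2)).
  move=> [i j] /=; exact: P2_near.
have h4 : \forall w \near z, forall x : 'I_r * 'I_r, al_ent z x.1 x.2 ->
    aligned w x.1 x.2 -> entangled w x.1 x.2.
  apply: (near_all (P := fun (x : 'I_r * 'I_r) (w : mat) => al_ent z x.1 x.2 ->
    aligned w x.1 x.2 -> entangled w x.1 x.2)).
  move=> [i j] /=; case: (boolP (al_ent z i j)) => H.
    by apply: filterS (P3_near oz H) => w Hw _.
  by apply: filterE.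
apply: filterS (filterI h1 (filterI h2 (filterI h3 h4))) => w [g1 [g2 [g3 g4]]].
split; [split|split].
- exact: g1.
- move=> i j ne; exact: (g2 (i, j) ne).
- move=> i j; exact: (g3 (i, j)).
- move=> i j; exact: (g4 (i, j)).
Qed.

Lemma dex_ge z w : good z w -> (dexterity z <= dexterity w)%N.
Proof. by move=> [_ [g2 _]]; exact: (ncls_le g2).1. Qed.

Lemma Ffilt_open (t : int) : open (@Ffilt R p k r t).
Proof.
rewrite openE => z [oz hz]; rewrite /interior.
apply: filterS (near_good oz) => w gw; split; first exact: gw.1.
by apply: le_trans hz _; rewrite lez_nat; exact: dex_ge.
Qed.

End Cfg.

Theorem lemma4p7 (R : realType) (p k r s : nat) :
  (1 <= k)%N -> (s <= r - 1)%N -> (1 <= r)%N ->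
  closed_submanifold_of (@stratum R p k r s%:Z) (@Ffilt R p k r s%:Z)
    (p * (r - s) + r * k)%N.
Proof.
move=> k1 sr r1.
split.
  exists (~` @Ffilt R p k r (s%:Z - 1)); split; first exact/open_closedC/Ffilt_open.
  by rewrite /stratum setDE setIC.
split; first by move=> z [].
move=> a [[oa ha] hna].
have da : dexterity a = (r - s)%N.
  have hb : ~ (r%:Z - (s%:Z - 1) <= (dexterity a)%:Z) by move=> h; apply: hna.
  move: ha hb; set d := dexterity a => ha hb.
  lia.
have [W [oW Wa] WP] : exists W, [/\ open W, W a & W `<=` good a].
  have : nbhs a (good a) := near_good oa.
  rewrite topology_structure.nbhsE => -[B [oB Ba] BP].
  by exists B.
pose d : 'I_r := Ordinal r1.
pose Ea := al_ent_equiv a.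
have symE : connect_sym (symc (al_ent a)) := symc_sym _.
pose F (X : {set 'I_r}) := odflt d [pick j in X].
pose root i := F (finset (Ea i)).
have R1 : forall i, Ea i (root i).
  move=> i; rewrite /root /F; case: pickP => [j|/(_ i)]; rewrite inE //.
  by rewrite /Ea /al_ent_equiv connect0.
have R2 : forall i j, Ea i j -> root i = root j.
  move=> i j Hij; rewrite /root /F; congr odflt; apply: eq_pick => x /=.
  by rewrite !inE; exact: (same_connect symE Hij x).
have R3 : forall i, root (root i) = root i.
  by move=> i; symmetry; apply: R2; exact: R1.
pose A := [set x : 'I_r * 'I_p | x.1 != root x.1]%SET.
have cA : #|A| = (s * p)%N.
  pose Rt := [set i | root i == i]%SET.
  have cRt : #|Rt| = dexterity a.
    have -> : Rt = [set root i | i : 'I_r]%SET.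
      apply/setP => i; rewrite inE; apply/eqP/imsetP => [<-|[j _ ->]].
        by exists i.
      exact: R3.
    have -> : [set root i | i : 'I_r]%SET = (F @: [set finset (Ea i) | i : 'I_r])%SET.
      by rewrite -imset_comp.
    rewrite card_in_imset //.
    move=> X Y /imsetP [x _ ->] /imsetP [y _ ->] /= e.
    have Hxy : Ea x y.
      have e' : root x = root y by exact: e.
      have h := R1 y; rewrite -e' in h.
      exact: connect_trans (R1 x) (etrans (symE (root x) y) h).
    by apply/setP => u; rewrite !inE; exact: (same_connect symE Hxy u).
  have -> : A = finset.setX (~: Rt) [set: 'I_p]%SET.
    by apply/setP => [[i q]]; rewrite !inE andbT eq_sym.
  rewrite cardsX cardsT card_ord.
  have := cardsC Rt; rewrite card_ord cRt da => h.
  have -> : #|~: Rt| = s by lia.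
  by [].
have base_path : forall (w : 'M[R]_(r, p + k)) (i j : 'I_r), connect (symc (al_ent w)) i j -> base w i = base w j.
  move=> w i j /fingraph.connectP [pth Hp ->]; elim: pth i Hp => //= y pth IH i /andP [Hxy Hp].
  rewrite -(IH y Hp); case/orP: Hxy => /asboolP [al _] //.
pose g := @G R r (p + k) #|A| (fun t => (enum_val t).1) (fun t => root (enum_val t).1)
  (fun t => lshift k (enum_val t).2).
exists #|A|, W, g.
split.
  split => //.
    rewrite cA; nia.
  move=> w /WP gw; split; first exact: gw.1.
  by apply: le_trans ha _; rewrite lez_nat; exact: dex_ge gw.
split; first exact: G_smooth.
split.
  apply/seteqP; split => w.
    move=> [Sw Ww]; split => //.
    have gw := WP _ Ww.
    move: Sw => [[ow hw] hnw].
    have dw : dexterity w = (r - s)%N.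
      have hb : ~ (r%:Z - (s%:Z - 1) <= (dexterity w)%:Z) by move=> h; apply: hnw.
      move: hw hb; set dd := dexterity w => hw hb.
      lia.
    have Hsub := (ncls_le gw.2.1).2 (etrans da (esym dw)).
    apply/rowP => t; rewrite !mxE.
    have hb := base_path _ _ _ (Hsub _ _ (R1 (enum_val t).1)).
    have := congr1 (fun M : 'rV_p => M 0 (enum_val t).2) hb; rewrite !mxE => ->.
    by rewrite subrr.
  move=> [Ww gw0]; split => //.
  have gw := WP _ Ww.
  have hb : forall i, base w i = base w (root i).
    move=> i; case: (eqVneq i (root i)) => [<-//|ne].
    apply/rowP => q; rewrite !mxE.
    have xA : (i, q) \in A by rewrite inE.
    have := congr1 (fun M : 'rV_#|A| => M 0 (enum_rank_in xA (i, q))) gw0.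
    rewrite !mxE (enum_rankK_in xA xA) /=.
    by move/eqP; rewrite subr_eq0 => /eqP.
  have sub2 : forall i j, al_ent a i j -> al_ent w i j.
    move=> i j H; apply/asboolP.
    have alw : aligned w i j.
      rewrite /aligned hb (hb j); congr base; apply: R2.
      by apply: connect1; rewrite /symc H.
    by split => //; exact: gw.2.2 i j H alw.
  have eqc : forall i j, Ea i j = al_ent_equiv w i j.
    move=> i j; apply/idP/idP; apply: connect_sub => x y /orP [] h; apply: connect1.
    - by rewrite (sub2 _ _ h).
    - by rewrite (sub2 _ _ h) orbT.
    - by rewrite (gw.2.1 _ _ h).
    - by rewrite (gw.2.1 _ _ h) orbT.
  have dw : dexterity w = dexterity a.
    rewrite /dexterity.
    have -> : [set finset (al_ent_equiv w i) | i : 'I_r]%SET =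
              [set finset (al_ent_equiv a i) | i : 'I_r]%SET.
      apply: eq_imset => i /=; apply/setP => j.
      by rewrite !inE -eqc.
    by [].
  split.
    split; first exact: gw.1.
    by rewrite dw.
  move=> [_ h]; move: h; rewrite dw da; lia.
move=> x _ y.
pose v : 'M[R]_(r, p + k) := \matrix_(i, j) \sum_(t < #|A|)
  (if ((enum_val t).1 == i) && (lshift k (enum_val t).2 == j) then y 0 t else 0).
exists v; rewrite G_derive; apply/rowP => t0; rewrite !mxE.
rewrite (bigD1 t0) //= !eqxx /= big1 ?addr0; last first.
  move=> t ne; case: ifP => // /andP [/eqP e1 /eqP /lshift_inj e2].
  exfalso; move/eqP: ne; apply; apply: enum_val_inj.
  by rewrite (surjective_pairing (enum_val t)) e1 e2 -surjective_pairing.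
rewrite big1 ?subr0 // => t _; case: ifP => // /andP [/eqP e1 _].
exfalso; have := enum_valP t; rewrite inE e1 R3 eqxx.
by [].
Qed.
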